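(* For every natural number $n>2$, the star $K_{1,n}$ is not $\mathcal{D}_t$-unique. In particular, the $\mathcal{D}_t$-equivalence class $[K_{1,n}]$ contains $K_{1,n}$, the lollipop graph $L(n,1)$, and every graph $L(n,1)-e$ where $e$ is an edge of the complete graph $K_n$ inside $L(n,1)$ that shares no endpoint with the pendant edge of $L(n,1)$.
   Context: $K_{1,n}$ is the star with one center and $n$ leaves. The lollipop graph $L(n,1)$ is the complete graph $K_n$ with one extra vertex joined by a single (pendant) edge to one vertex of $K_n$. For a finite simple graph $G=(V,E)$, a set $D\subseteq V$ is a total dominating set if every vertex of $V$ is adjacent to some vertex of $D$; $d_t(G,i)$ is the number of total dominating sets of size $i$, and $D_t(G,x)=\sum_{i} d_t(G,i)x^i$ is the total domination polynomial. Two graphs $G,H$ are $\mathcal{D}_t$-equivalent if $D_t(G,x)=D_t(H,x)$ (graphs being compared among graphs of the same order); $[G]$ is the class of graphs $\mathcal{D}_t$-equivalent to $G$, and $G$ is $\mathcal{D}_t$-unique if every graph $\mathcal{D}_t$-equivalent to $G$ is isomorphic to $G$. *)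

(* Defs.v *)
From mathcomp Require Import all_boot all_order all_algebra.
Set Implicit Arguments. Unset Strict Implicit. Unset Printing Implicit Defensive.
Import GRing.Theory.
Local Open Scope ring_scope.

Definition simple_graph (T : finType) (e : rel T) : Prop :=
  symmetric e /\ irreflexive e.

Definition total_dominating (T : finType) (e : rel T) (D : {set T}) : bool :=
  [forall x, [exists y in D, e x y]].

Definition Dt (T : finType) (e : rel T) : {poly int} :=
  \sum_(D : {set T} | total_dominating e D) 'X^#|D|.

Definition graph_iso (T T' : finType) (e : rel T) (e' : rel T') : Prop :=
  exists f : T -> T', bijective f /\ forall x y, e' (f x) (f y) = e x y.

Definition Dt_unique (T : finType) (e : rel T) : Prop :=
  forall (T' : finType) (e' : rel T'), simple_graph e' -> #|T'| = #|T| ->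
    Dt e' = Dt e -> graph_iso e e'.

(* Star K_{1,n} on vertices 0..n, center n. *)
Definition star (n : nat) : rel 'I_n.+1 :=
  fun x y => (x != y) && ((nat_of_ord x == n) || (nat_of_ord y == n)).

(* Lollipop L(n,1): K_n on 0..n-1, pendant vertex n joined to vertex 0. *)
Definition lollipop (n : nat) : rel 'I_n.+1 :=
  fun x y => (x != y) &&
    [|| (x < n)%N && (y < n)%N,
        (nat_of_ord x == 0%N) && (nat_of_ord y == n)
      | (nat_of_ord x == n) && (nat_of_ord y == 0%N)].

Arguments lollipop : clear implicits.
Definition lollipop_minus (n : nat) (a b : 'I_n.+1) : rel 'I_n.+1 :=
  fun x y => lollipop n x y && ~~ (((x == a) && (y == b)) || ((x == b) && (y == a))).
Arguments lollipop_minus : clear implicits.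
Arguments star : clear implicits.

(* Main.v *)
Require Import Defs.
From mathcomp Require Import all_boot all_order all_algebra.
From mathcomp Require Import zify perm fingroup.
Set Implicit Arguments. Unset Strict Implicit. Unset Printing Implicit Defensive.

Definition Shub (T : finType) (h : T) : {poly int} :=
  (\sum_(D : {set T} | (h \in D) && (1 < #|D|)%N) 'X^#|D|)%R.

Lemma td_hub (T : finType) (e : rel T) (h p : T) :
  e h h = false -> (forall y, y != h -> e h y && e y h) ->
  (forall y, e p y -> y == h) ->
  forall D : {set T}, total_dominating e D = (h \in D) && (1 < #|D|)%N.
Proof.
move=> ehh eh ep D; apply/idP/idP.
- move/forallP=> H.
  have /existsP [y /andP [yD epy]] := H p.
  have hD : h \in D by move: (ep _ epy) => /eqP <-.
  have /existsP [z /andP [zD ehz]] := H h.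
  have zh : z != h by apply/eqP => zh; rewrite zh ehh in ehz.
  rewrite hD /= (cardsD1 h D) hD add1n ltnS card_gt0.
  by apply/set0Pn; exists z; rewrite in_setD1 zh zD.
- case/andP=> hD; rewrite (cardsD1 h D) hD add1n ltnS card_gt0.
  case/set0Pn=> z; rewrite in_setD1 => /andP [zh zD].
  apply/forallP=> x; apply/existsP.
  case: (eqVneq x h) => [->|xh].
  + by exists z; rewrite zD /=; case/andP: (eh _ zh).
  + by exists h; rewrite hD /=; case/andP: (eh _ xh).
Qed.

Lemma Dt_hub (T : finType) (e : rel T) (h : T) :
  (forall D : {set T}, total_dominating e D = (h \in D) && (1 < #|D|)%N) ->
  Dt e = Shub h.
Proof. by move=> H; rewrite /Dt /Shub; apply: eq_bigl => D; rewrite H. Qed.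

Lemma Shub_swap (T : finType) (h h' : T) : Shub h = Shub h'.
Proof.
rewrite /Shub.
pose f := fun D : {set T} => [set tperm h h' x | x in D].
have fK : cancel f f.
  move=> D; rewrite /f -imset_comp.
  rewrite -[RHS]imset_id; apply: eq_imset => x /=; exact: tpermK.
rewrite (reindex f); last by exists f => D _; exact: fK.
apply: eq_big => D.
- rewrite /f card_imset; last exact: perm_inj.
  by rewrite -{1}(tpermR h h') mem_imset //; exact: perm_inj.
- by move=> _; rewrite /f card_imset //; exact: perm_inj.
Qed.

Lemma ord_eqE n (x y : 'I_n) : (x == y) = (nat_of_ord x == nat_of_ord y).
Proof. by []. Qed.

Lemma star_td n (hn : (0 < n)%N) (D : {set 'I_n.+1}) :
  total_dominating (star n) D = (ord_max \in D) && (1 < #|D|)%N.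
Proof.
apply: (td_hub (p := ord0)).
- by rewrite /star eqxx.
- move=> y; rewrite /star !ord_eqE /= => yh.
  by rewrite !eqxx !orbT !andbT eq_sym yh.
- move=> y; rewrite /star !ord_eqE /= => /andP [_]; rewrite (eq_sym 0%N n).
  by case: n hn {D} y => // n _ y.
Qed.

Lemma lol_td n (hn : (0 < n)%N) (D : {set 'I_n.+1}) :
  total_dominating (lollipop n) D = (ord0 \in D) && (1 < #|D|)%N.
Proof.
apply: (td_hub (p := ord_max)).
- by rewrite /lollipop eqxx.
- move=> y; rewrite /lollipop !ord_eqE /= => yh.
  rewrite yh eq_sym yh /=.
  have y0 : (nat_of_ord y != 0)%N by [].
  move: (ltn_ord y); rewrite ltnS leq_eqVlt => /orP [/eqP yn|yn];
    rewrite ?yn ?ltnn ?eqxx ?hn ?(negbTE y0) /= ?andbT ?orbT //.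
- move=> y; rewrite /lollipop !ord_eqE /= => /andP [_].
  rewrite ltnn /=; case: n hn {D} y => // n _ y /=.
  by case/andP.
Qed.

Lemma lolm_td n (hn : (0 < n)%N) (a b : 'I_n.+1) (D : {set 'I_n.+1}) :
  nat_of_ord a != 0%N -> nat_of_ord b != 0%N ->
  total_dominating (lollipop_minus n a b) D = (ord0 \in D) && (1 < #|D|)%N.
Proof.
move=> a0 b0.
apply: (td_hub (p := ord_max)).
- by rewrite /lollipop_minus /lollipop eqxx.
- move=> y yh; rewrite /lollipop_minus.
  have /andP [l1 l2] : lollipop n ord0 y && lollipop n y ord0.
    move: yh; rewrite /lollipop !ord_eqE /= => yh.
    rewrite yh eq_sym yh /=.
    have y0 : (nat_of_ord y != 0)%N by [].
    move: (ltn_ord y); rewrite ltnS leq_eqVlt => /orP [/eqP yn|yn];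
      rewrite ?yn ?ltnn ?eqxx ?hn ?(negbTE y0) /= ?andbT ?orbT //.
  rewrite l1 l2 /= !ord_eqE /=.
  by rewrite !(eq_sym 0%N) (negbTE a0) (negbTE b0) /= !andbF.
- move=> y; rewrite /lollipop_minus /lollipop !ord_eqE /= => /andP [/andP [_ +] _].
  rewrite ltnn /=; case: n hn {D} y a b a0 b0 => // n _ y a b _ _ /=.
  by case/andP.
Qed.

Lemma star_not_unique n (hn : (2 < n)%N) (U : Dt_unique (star n))
  (Heq : Dt (lollipop n) = Dt (star n)) : False.
Proof.
have sg : simple_graph (lollipop n).
  split.
  - move=> x y; rewrite /lollipop eq_sym; congr (_ && _).
    by case: (x < n)%N; case: (y < n)%N; case: (nat_of_ord x == 0%N);
      case: (nat_of_ord y == 0%N); case: (nat_of_ord x == n); case: (nat_of_ord y == n).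
  - by move=> x; rewrite /lollipop eqxx.
have [f [[g fK gK] hf]] := U _ (lollipop n) sg erefl Heq.
have n0 : (0 < n)%N by apply: ltn_trans hn.
have n1 : (1 < n)%N by apply: ltn_trans hn.
pose x0 : 'I_n.+1 := inord 0; pose x1 : 'I_n.+1 := inord 1;
pose x2 : 'I_n.+1 := inord 2.
have v0 : nat_of_ord x0 = 0%N by rewrite inordK.
have v1 : nat_of_ord x1 = 1%N by rewrite inordK // ltnS ltnW.
have v2 : nat_of_ord x2 = 2%N by rewrite inordK // ltnS ltnW.
have L : forall u v : 'I_n.+1, u != v -> (u < n)%N -> (v < n)%N -> star n (g u) (g v).
  by move=> u v uv un vn; rewrite -hf !gK /lollipop uv un vn.
have h01 := L x0 x1; have h02 := L x0 x2; have h12 := L x1 x2.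
rewrite !ord_eqE v0 v1 v2 n0 n1 hn in h01 h02 h12.
have a := h01 isT isT isT; have b := h02 isT isT isT; have c := h12 isT isT isT.
clear h01 h02 h12.
move: a b c; rewrite /star !ord_eqE.
have i01 : nat_of_ord (g x0) != nat_of_ord (g x1).
  apply/negP => /eqP /val_inj /(congr1 f); rewrite !gK => /(congr1 (@nat_of_ord _)).
  by rewrite v0 v1.
have i02 : nat_of_ord (g x0) != nat_of_ord (g x2).
  apply/negP => /eqP /val_inj /(congr1 f); rewrite !gK => /(congr1 (@nat_of_ord _)).
  by rewrite v0 v2.
have i12 : nat_of_ord (g x1) != nat_of_ord (g x2).
  apply/negP => /eqP /val_inj /(congr1 f); rewrite !gK => /(congr1 (@nat_of_ord _)).
  by rewrite v1 v2.
move: i01 i02 i12.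
case: (nat_of_ord (g x0) =P n) => [->|_]; case: (nat_of_ord (g x1) =P n) => [->|_];
  case: (nat_of_ord (g x2) =P n) => [->|_]; rewrite ?eqxx //= ?andbF //.
Qed.

Theorem mainTheorem6 (n : nat) (hn : (2 < n)%N) :
  ~ Dt_unique (star n) /\
  Dt (lollipop n) = Dt (star n) /\
  (forall a b : 'I_n.+1,
     a != b -> (a < n)%N -> (b < n)%N ->
     nat_of_ord a != 0%N -> nat_of_ord b != 0%N ->
     Dt (lollipop_minus n a b) = Dt (star n)).
Proof.
have n0 : (0 < n)%N by apply: ltn_trans hn.
have E1 : Dt (lollipop n) = Dt (star n).
  rewrite (Dt_hub (lol_td n0)) (Dt_hub (star_td n0)); exact: Shub_swap.
split; first by move=> U; exact: (star_not_unique hn U E1).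
split=> // a b _ _ _ a0 b0.
rewrite (Dt_hub (fun D => lolm_td n0 D a0 b0)) (Dt_hub (star_td n0)).
exact: Shub_swap.
Qed.
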